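(* Let $(X,d)$ be a complete Busemann convex geodesic metric space which is uniformly convex with a modulus of uniform convexity that is monotone or lower semicontinuous from the right. Let $(A,B)$ be a closed convex pair of subsets of $X$ with $B$ bounded, and let $T:A\cup B\to A\cup B$ be a cyclic relatively nonexpansive mapping. Then there exists $(x,y)\in A\times B$ such that $d(x,Tx)=d(y,Ty)=\operatorname{dist}(A,B)$.
   Context: $\operatorname{dist}(A,B)=\inf\{d(x,y):x\in A,y\in B\}$. A geodesic space is one in which any two points are joined by a geodesic segment; a subset is convex if it contains every geodesic segment joining two of its points. $X$ is Busemann convex if for any geodesics $c_1:[0,l_1]\to X$, $c_2:[0,l_2]\to X$, $d(c_1(tl_1),c_2(tl_2))\le (1-t)d(c_1(0),c_2(0))+t\,d(c_1(l_1),c_2(l_2))$ for all $t\in[0,1]$. $X$ is uniformly convex if for every $r>0$ and $\varepsilon\in(0,2]$ there is $\delta\in(0,1]$ such that for all $a,x,y$ with $d(x,a)\le r$, $d(y,a)\le r$, $d(x,y)\ge\varepsilon r$, every midpoint $m$ of $x,y$ satisfies $d(m,a)\le(1-\delta)r$; a function $\delta(r,\varepsilon)$ providing such $\delta$ is a modulus of uniform convexity; it is monotone if it is decreasing in $r$ for each fixed $\varepsilon$, and lower semicontinuous from the right if it is lower semicontinuous from the right in $r$ for each fixed $\varepsilon$. $T$ is relatively nonexpansive if $d(Tx,Ty)\le d(x,y)$ for all $x\in A$, $y\in B$, and cyclic if $T(A)\subseteq B$, $T(B)\subseteq A$. *)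

(* Defs.v *)
From Stdlib Require Import Reals.
From Coquelicot Require Import Coquelicot.
Open Scope R_scope.

Definition is_metric {X : Type} (d : X -> X -> R) : Prop :=
  (forall x y, 0 <= d x y) /\
  (forall x y, d x y = 0 <-> x = y) /\
  (forall x y, d x y = d y x) /\
  (forall x y z, d x z <= d x y + d y z).

Definition is_geodesic {X : Type} (d : X -> X -> R) (c : R -> X) (l : R) : Prop :=
  0 <= l /\
  forall s t, 0 <= s <= l -> 0 <= t <= l -> d (c s) (c t) = Rabs (s - t).

Definition geodesic_joining {X : Type} (d : X -> X -> R) (c : R -> X) (l : R) (x y : X) : Prop :=
  is_geodesic d c l /\ c 0 = x /\ c l = y.

Definition geodesic_space {X : Type} (d : X -> X -> R) : Prop :=
  forall x y : X, exists (c : R -> X) (l : R), geodesic_joining d c l x y.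

Definition geod_convex {X : Type} (d : X -> X -> R) (A : X -> Prop) : Prop :=
  forall x y (c : R -> X) (l : R), A x -> A y -> geodesic_joining d c l x y ->
    forall t, 0 <= t <= l -> A (c t).

Definition busemann_convex {X : Type} (d : X -> X -> R) : Prop :=
  forall (c1 c2 : R -> X) (l1 l2 : R), is_geodesic d c1 l1 -> is_geodesic d c2 l2 ->
    forall t, 0 <= t <= 1 ->
      d (c1 (t * l1)) (c2 (t * l2)) <= (1 - t) * d (c1 0) (c2 0) + t * d (c1 l1) (c2 l2).

Definition is_midpoint {X : Type} (d : X -> X -> R) (x y m : X) : Prop :=
  d x m = d x y / 2 /\ d m y = d x y / 2.

Definition modulus_uc {X : Type} (d : X -> X -> R) (delta : R -> R -> R) : Prop :=
  forall r eps, 0 < r -> 0 < eps <= 2 ->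
    0 < delta r eps <= 1 /\
    forall a x y m, d x a <= r -> d y a <= r -> d x y >= eps * r ->
      is_midpoint d x y m -> d m a <= (1 - delta r eps) * r.

Definition uniformly_convex {X : Type} (d : X -> X -> R) : Prop :=
  exists delta, modulus_uc d delta.

Definition modulus_monotone (delta : R -> R -> R) : Prop :=
  forall eps r1 r2, 0 < eps <= 2 -> 0 < r1 -> r1 <= r2 -> delta r2 eps <= delta r1 eps.

Definition modulus_lsc_right (delta : R -> R -> R) : Prop :=
  forall eps r, 0 < eps <= 2 -> 0 < r ->
    forall eta, 0 < eta -> exists theta, 0 < theta /\
      forall s, r < s < r + theta -> delta r eps - eta < delta s eps.

Definition cauchy_seq {X : Type} (d : X -> X -> R) (u : nat -> X) : Prop :=
  forall e, 0 < e -> exists N, forall n m, (N <= n)%nat -> (N <= m)%nat -> d (u n) (u m) < e.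

Definition seq_converges_to {X : Type} (d : X -> X -> R) (u : nat -> X) (x : X) : Prop :=
  forall e, 0 < e -> exists N, forall n, (N <= n)%nat -> d (u n) x < e.

Definition complete_metric {X : Type} (d : X -> X -> R) : Prop :=
  forall u, cauchy_seq d u -> exists x, seq_converges_to d u x.

Definition metric_closed {X : Type} (d : X -> X -> R) (A : X -> Prop) : Prop :=
  forall u x, (forall n, A (u n)) -> seq_converges_to d u x -> A x.

Definition metric_bounded {X : Type} (d : X -> X -> R) (B : X -> Prop) : Prop :=
  exists x0 M, forall b, B b -> d x0 b <= M.

Definition distAB {X : Type} (d : X -> X -> R) (A B : X -> Prop) : Rbar :=
  Glb_Rbar (fun r => exists x y, A x /\ B y /\ r = d x y).

Definition cyclic_map {X : Type} (A B : X -> Prop) (T : X -> X) : Prop :=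
  (forall x, A x -> B (T x)) /\ (forall y, B y -> A (T y)).

Definition relatively_nonexpansive {X : Type} (d : X -> X -> R) (A B : X -> Prop) (T : X -> X) : Prop :=
  forall x y, A x -> B y -> d (T x) (T y) <= d x y.

(* Main.v *)
Require Import Defs.
From Stdlib Require Import Reals Lra Lia Classical IndefiniteDescription.
From Coquelicot Require Import Coquelicot.
Open Scope R_scope.
Lemma sup_ex (P : R -> Prop) (U : R) : (exists r, P r) -> (forall r, P r -> r <= U) ->
  exists s, (forall r, P r -> r <= s) /\ (forall e, 0 < e -> exists r, P r /\ s - e < r).
Proof.
  intros Hne Hub.
  destruct (completeness P) as [s [Hs1 Hs2]].
  - exists U. intros r Hr. apply Hub; auto.
  - exact Hne.
  - exists s. split. { intros r Hr. apply Hs1; auto. }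
    intros e He. apply NNPP; intro Hn.
    assert (Hb : is_upper_bound P (s - e)).
    { intros r Hr. destruct (Rle_lt_dec r (s - e)) as [h|h]; auto.
      exfalso; apply Hn; exists r; split; auto. }
    specialize (Hs2 _ Hb). lra.
Qed.

Lemma inf_ex (P : R -> Prop) (L : R) : (exists r, P r) -> (forall r, P r -> L <= r) ->
  exists m, (forall r, P r -> m <= r) /\ (forall e, 0 < e -> exists r, P r /\ r < m + e).
Proof.
  intros [r0 Hr0] Hlb.
  destruct (sup_ex (fun x => P (- x)) (- L)) as [s [H1 H2]].
  - exists (- r0). rewrite Ropp_involutive. auto.
  - intros r Hr. specialize (Hlb _ Hr). lra.
  - exists (- s). split.
    + intros r Hr. assert (h := H1 (- r)). rewrite Ropp_involutive in h. specialize (h Hr). lra.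
    + intros e He. destruct (H2 e He) as [r [Hr Hr']]. exists (- r). split; auto. lra.
Qed.
Lemma geo_len {X} (d : X -> X -> R) c l x y : geodesic_joining d c l x y -> d x y = l.
Proof.
  intros [[Hl Hg] [H0 H1]]. subst. rewrite Hg; try lra.
  rewrite Rabs_minus_sym. rewrite Rabs_pos_eq; lra.
Qed.

Lemma geo_mid {X} (d : X -> X -> R) c l x y : geodesic_joining d c l x y ->
  is_midpoint d x y (c (1/2 * l)).
Proof.
  intros G. assert (E := geo_len _ _ _ _ _ G).
  unfold is_midpoint. rewrite E. destruct G as [[Hl Hg] [H0 H1]]. subst. split.
  - rewrite Hg; try lra. rewrite Rabs_minus_sym. rewrite Rabs_pos_eq; lra.
  - rewrite Hg; try lra. rewrite Rabs_minus_sym. rewrite Rabs_pos_eq; lra.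
Qed.

Lemma mid_pair {X} (d : X -> X -> R) : busemann_convex d -> geodesic_space d ->
  forall x x' y y', exists mx my, is_midpoint d x x' mx /\ is_midpoint d y y' my /\
   (forall P, geod_convex d P -> P x -> P x' -> P mx) /\
   (forall Q, geod_convex d Q -> Q y -> Q y' -> Q my) /\
   d mx my <= (d x y + d x' y') / 2.
Proof.
  intros Hbus Hgeo x x' y y'.
  destruct (Hgeo x x') as [c1 [l1 G1]]. destruct (Hgeo y y') as [c2 [l2 G2]].
  exists (c1 (1/2 * l1)), (c2 (1/2 * l2)).
  split; [apply geo_mid; auto|]. split; [apply geo_mid; auto|].
  split; [|split].
  - intros P HP Hx Hx'. apply (HP x x' c1 l1); auto. destruct G1 as [[Hl _] _]; lra.
  - intros P HP Hx Hx'. apply (HP y y' c2 l2); auto. destruct G2 as [[Hl _] _]; lra.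
  - destruct G1 as [g1 [a1 b1]]. destruct G2 as [g2 [a2 b2]].
    assert (h := Hbus c1 c2 l1 l2 g1 g2 (1/2) ltac:(lra)).
    rewrite a1, b1, a2, b2 in h. lra.
Qed.

Definition UCU {X} (d : X -> X -> R) := forall r0 e, 0 <= r0 -> 0 < e -> exists th c, 0 < th /\ 0 < c /\
  forall a x y m, d x a <= r0 + th -> d y a <= r0 + th -> e <= d x y -> is_midpoint d x y m -> d m a <= r0 - c.

Lemma ucu_of {X} (d : X -> X -> R) : is_metric d ->
  (exists delta : R -> R -> R, modulus_uc d delta /\
     (modulus_monotone delta \/ modulus_lsc_right delta)) -> UCU d.
Proof.
  intros [Hpos [Hsep [Hsym Htri]]] [delta [Huc Hmon]] r0 e Hr0 He.
  destruct (Req_dec r0 0) as [Z|NZ].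
  - subst. exists (e/4), 1. split; [lra|]. split; [lra|].
    intros a x y m h1 h2 h3 _. exfalso. assert (t := Htri x a y). rewrite (Hsym a y) in t. lra.
  - assert (Hr : 0 < r0) by lra.
    set (e' := Rmin e r0).
    assert (He' : 0 < e' /\ e' <= e /\ e' <= r0) by (unfold e'; split; [apply Rmin_glb_lt; lra| split; [apply Rmin_l|apply Rmin_r]]).
    set (eps0 := e' / (r0 + 1)).
    assert (Heps : 0 < eps0 <= 1).
    { unfold eps0. split. apply Rdiv_lt_0_compat; lra.
      apply Rmult_le_reg_r with (r0+1); [lra|]. field_simplify; lra. }
    assert (Key : forall r1, r0 <= r1 <= r0 + 1 -> forall a x y m, d x a <= r1 -> d y a <= r1 -> e <= d x y ->
               is_midpoint d x y m -> d m a <= (1 - delta r1 eps0) * r1).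
    { intros r1 Hr1 a x y m h1 h2 h3 h4.
      destruct (Huc r1 eps0 ltac:(lra) ltac:(lra)) as [_ U]. apply (U a x y m); auto.
      apply Rle_ge. apply Rle_trans with e'; [|lra].
      unfold eps0. apply Rmult_le_reg_r with (r0+1); [lra|].
      replace (e' / (r0 + 1) * r1 * (r0 + 1)) with (e' * r1) by (field; lra).
      assert (0 < e') by lra. nra. }
    destruct Hmon as [Mon|Lsc].
    + set (d1 := delta (r0+1) eps0).
      assert (Hd1 : 0 < d1) by (destruct (Huc (r0+1) eps0 ltac:(lra) ltac:(lra)) as [[p _] _]; exact p).
      exists (Rmin 1 (r0 * d1 / 2)), (r0 * d1 / 2).
      assert (Hth : 0 < Rmin 1 (r0*d1/2) /\ Rmin 1 (r0*d1/2) <= 1 /\ Rmin 1 (r0*d1/2) <= r0*d1/2).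
      { split; [apply Rmin_glb_lt; [lra| apply Rdiv_lt_0_compat; nra]|split;[apply Rmin_l|apply Rmin_r]]. }
      split; [lra|]. split; [apply Rdiv_lt_0_compat; nra|].
      intros a x y m h1 h2 h3 h4.
      set (th := Rmin 1 (r0*d1/2)) in *.
      assert (K := Key (r0 + th) ltac:(lra) a x y m h1 h2 h3 h4).
      assert (M := Mon eps0 (r0 + th) (r0 + 1) ltac:(lra) ltac:(lra) ltac:(lra)).
      fold d1 in M. nra.
    + set (d0 := delta r0 eps0).
      assert (Hd0 : 0 < d0) by (destruct (Huc r0 eps0 ltac:(lra) ltac:(lra)) as [[p _] _]; exact p).
      destruct (Lsc eps0 r0 ltac:(lra) Hr (d0/2) ltac:(lra)) as [th' [Hth' L]].
      set (th := Rmin (Rmin 1 (th'/2)) (r0 * d0 / 4)).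
      assert (Hth : 0 < th /\ th <= 1 /\ th <= th'/2 /\ th <= r0*d0/4).
      { unfold th. repeat split.
        - apply Rmin_glb_lt; [apply Rmin_glb_lt; lra|]. apply Rdiv_lt_0_compat; nra.
        - eapply Rle_trans; [apply Rmin_l|apply Rmin_l].
        - eapply Rle_trans; [apply Rmin_l|apply Rmin_r].
        - apply Rmin_r. }
      exists th, (r0 * d0 / 4). split; [lra|]. split; [apply Rdiv_lt_0_compat; nra|].
      intros a x y m h1 h2 h3 h4.
      assert (K := Key (r0 + th) ltac:(lra) a x y m h1 h2 h3 h4).
      assert (M := L (r0 + th) ltac:(lra)). fold d0 in M. nra.
Qed.
Lemma cauchy_center {X} (d : X -> X -> R) : UCU d -> forall (u : nat -> X) a r0, 0 <= r0 ->
 (forall th, 0 < th -> exists N, forall n, (N <= n)%nat -> d (u n) a <= r0 + th) ->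
 (forall c, 0 < c -> exists N, forall n m, (N <= n)%nat -> (N <= m)%nat ->
     exists mid, is_midpoint d (u n) (u m) mid /\ r0 - c < d mid a) ->
 cauchy_seq d u.
Proof.
  intros U u a r0 Hr0 H1 H2 e He.
  destruct (U r0 e Hr0 He) as [th [c [Hth [Hc K]]]].
  destruct (H1 th Hth) as [N1 HN1]. destruct (H2 c Hc) as [N2 HN2].
  exists (Nat.max N1 N2). intros n m Hn Hm.
  destruct (Rlt_le_dec (d (u n) (u m)) e) as [h|h]; auto. exfalso.
  destruct (HN2 n m ltac:(lia) ltac:(lia)) as [mid [Hmid Hlo]].
  assert (t := K a (u n) (u m) mid (HN1 n ltac:(lia)) (HN1 m ltac:(lia)) h Hmid). lra.
Qed.

Lemma partner {X} (d : X -> X -> R) : is_metric d -> UCU d -> busemann_convex d -> geodesic_space d ->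
  forall D (P Q : X -> Prop), 0 <= D -> geod_convex d P -> (forall u v, P u -> Q v -> D <= d u v) ->
  forall e, 0 < e -> exists eta, 0 < eta /\ forall x x' y y', P x -> P x' -> Q y -> Q y' ->
    d x y <= D -> d x' y' <= D -> e <= d x x' -> eta <= d y y'.
Proof.
  intros [Hpos [Hsep [Hsym Htri]]] U Hbus Hgeo D P Q HD HP HPQ e He.
  destruct (U D e HD He) as [th [c [Hth [Hc K]]]].
  exists th. split; auto. intros x x' y y' Px Px' Qy Qy' h1 h2 h3.
  destruct (Rlt_le_dec (d y y') th) as [h|h]; auto. exfalso.
  destruct (mid_pair d Hbus Hgeo x x' y y') as [mx [my [Mx [_ [Cx _]]]]].
  assert (Pm : P mx) by (apply Cx; auto).
  assert (t1 : d x y <= D + th) by lra.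
  assert (t2 : d x' y <= D + th) by (assert (q := Htri x' y' y); rewrite (Hsym y' y) in q; lra).
  assert (t := K y x x' mx t1 t2 h3 Mx).
  assert (q := HPQ mx y Pm Qy). lra.
Qed.
Lemma small_inv : forall th, 0 < th -> exists N, forall n, (N <= n)%nat -> / (INR n + 1) < th.
Proof.
  intros th Hth. destruct (archimed_cor1 th Hth) as [N [H1 H2]].
  exists N. intros n Hn. apply Rle_lt_trans with (/ INR N); auto.
  apply Rinv_le_contravar. apply lt_0_INR; auto.
  apply le_INR in Hn. lra.
Qed.

Lemma limit_le {X} (d : X -> X -> R) : is_metric d -> forall (xs ys : nat -> X) x y D,
  seq_converges_to d xs x -> seq_converges_to d ys y ->
  (forall e, 0 < e -> exists N, forall n, (N <= n)%nat -> d (xs n) (ys n) <= D + e) ->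
  d x y <= D.
Proof.
  intros [Hpos [Hsep [Hsym Htri]]] xs ys x y D Hx Hy H.
  destruct (Rle_lt_dec (d x y) D) as [h|h]; auto. exfalso.
  set (e := (d x y - D) / 4).
  assert (He : 0 < e) by (unfold e; lra).
  destruct (Hx e He) as [N1 H1]. destruct (Hy e He) as [N2 H2]. destruct (H e He) as [N3 H3].
  set (n := Nat.max N1 (Nat.max N2 N3)).
  assert (a1 := H1 n ltac:(lia)). assert (a2 := H2 n ltac:(lia)). assert (a3 := H3 n ltac:(lia)).
  assert (t1 := Htri x (xs n) y). assert (t2 := Htri (xs n) (ys n) y).
  rewrite (Hsym x (xs n)) in t1. unfold e in *. lra.
Qed.

Lemma exists_prox {X} (d : X -> X -> R) : is_metric d -> complete_metric d -> UCU d ->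
  busemann_convex d -> geodesic_space d ->
  forall (A B : X -> Prop) D, metric_closed d A -> metric_closed d B ->
  geod_convex d A -> geod_convex d B -> metric_bounded d B -> 0 <= D ->
  (forall x y, A x -> B y -> D <= d x y) ->
  (forall e, 0 < e -> exists x y, A x /\ B y /\ d x y < D + e) ->
  exists x y, A x /\ B y /\ d x y <= D.
Proof.
  intros Hm Hc U Hbus Hgeo A B D clA clB cvA cvB [p [M HM]] HD Hlow Happ.
  pose proof Hm as [Hpos [Hsep [Hsym Htri]]].
  set (Rs := fun s => exists t, 0 < t /\ forall x y, A x -> B y -> d x y < D + t -> s <= d p y).
  assert (ne : exists r, Rs r).
  { exists 0. exists 1. split; [lra|]. intros; apply Hpos. }
  assert (ub : forall r, Rs r -> r <= M).
  { intros s [t [Ht Hs]]. destruct (Happ t Ht) as [x [y [Ax [By Hxy]]]].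
    apply Rle_trans with (d p y). apply (Hs x y Ax By Hxy). apply HM; exact By. }
  destruct (sup_ex Rs M ne ub) as [rs [Hrs1 Hrs2]].
  assert (Hrs0 : 0 <= rs) by (apply Hrs1; exists 1; split; [lra|]; intros; apply Hpos).
  assert (beta : forall th t, 0 < th -> 0 < t -> exists x y, A x /\ B y /\ d x y < D + t /\ d p y < rs + th).
  { intros th t Hth Ht. apply NNPP. intro Hn.
    assert (Rs (rs + th)).
    { exists t. split; auto. intros x y Ax By Hxy.
      destruct (Rle_lt_dec (rs + th) (d p y)) as [h|h]; auto. exfalso. apply Hn. exists x, y; auto. }
    assert (q := Hrs1 _ H). lra. }
  assert (Hch : forall k : nat, exists q : X * X, A (fst q) /\ B (snd q) /\
      d (fst q) (snd q) < D + / (INR k + 1) /\ d p (snd q) < rs + / (INR k + 1)).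
  { intros k. assert (0 < / (INR k + 1)) by (apply Rinv_0_lt_compat; pose proof (pos_INR k); lra).
    destruct (beta _ _ H H) as [x [y Hxy]]. exists (x, y). simpl. exact Hxy. }
  destruct (functional_choice _ Hch) as [f Hf].
  set (xs := fun k => fst (f k)). set (ys := fun k => snd (f k)).
  assert (Cy : cauchy_seq d ys).
  { apply (cauchy_center d U ys p rs Hrs0).
    - intros th Hth. destruct (small_inv th Hth) as [N HN]. exists N. intros n Hn.
      destruct (Hf n) as [_ [_ [_ h]]]. specialize (HN n Hn). unfold ys. rewrite Hsym. lra.
    - intros c Hcc. destruct (Hrs2 c Hcc) as [s [[t [Ht Hs]] Hs']].
      destruct (small_inv t Ht) as [N HN]. exists N. intros n m Hn Hm'.
      destruct (mid_pair d Hbus Hgeo (xs n) (xs m) (ys n) (ys m)) as [mx [my [_ [My [Cx [Cy Hd]]]]]].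
      exists my. split; auto.
      destruct (Hf n) as [a1 [b1 [c1 _]]]. destruct (Hf m) as [a2 [b2 [c2 _]]].
      assert (Am : A mx) by (apply Cx; auto). assert (Bm : B my) by (apply Cy; auto).
      assert (q := Hs mx my Am Bm).
      assert (h1 := HN n Hn). assert (h2 := HN m Hm'). unfold xs, ys in Hd.
      rewrite Hsym. assert (s <= d p my); [apply q; lra|lra]. }
  destruct (Hc ys Cy) as [y Hy].
  assert (By : B y) by (apply (clB ys); auto; intro n; apply (Hf n)).
  assert (Cx : cauchy_seq d xs).
  { apply (cauchy_center d U xs y D HD).
    - intros th Hth. destruct (small_inv (th/2) ltac:(lra)) as [N1 HN1].
      destruct (Hy (th/2) ltac:(lra)) as [N2 HN2]. exists (Nat.max N1 N2). intros n Hn.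
      destruct (Hf n) as [_ [_ [h _]]]. assert (a := HN1 n ltac:(lia)). assert (b := HN2 n ltac:(lia)).
      assert (t := Htri (xs n) (ys n) y). unfold xs, ys in *. lra.
    - intros c Hcc. exists 0%nat. intros n m _ _.
      destruct (mid_pair d Hbus Hgeo (xs n) (xs m) y y) as [mx [my [Mx [_ [Cx _]]]]].
      exists mx. split; auto. assert (Am : A mx) by (apply Cx; [exact cvA|apply (Hf n)|apply (Hf m)]).
      assert (q := Hlow mx y Am By). lra. }
  destruct (Hc xs Cx) as [x Hx].
  assert (Ax : A x) by (apply (clA xs); auto; intro n; apply (Hf n)).
  exists x, y. split; auto. split; auto.
  apply (limit_le d Hm xs ys x y D Hx Hy).
  intros e He. destruct (small_inv e He) as [N HN]. exists N. intros n Hn.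
  destruct (Hf n) as [_ [_ [h _]]]. specialize (HN n Hn). unfold xs, ys. lra.
Qed.

Lemma le_eps (a b : R) : (forall e, 0 < e -> a <= b + e) -> a <= b.
Proof.
  intros H. destruct (Rle_lt_dec a b) as [h|h]; auto.
  specialize (H ((a - b)/2) ltac:(lra)). lra.
Qed.

Fixpoint orbit {X} (T : X -> X) (p : X * X) (n : nat) : X * X :=
  match n with
  | O => p
  | S k => let q := orbit T p k in (T (snd q), T (fst q))
  end.

Theorem mainTheorem5 (X : Type) (d : X -> X -> R) (A B : X -> Prop) (T : X -> X) :
  is_metric d ->
  complete_metric d ->
  busemann_convex d ->
  geodesic_space d ->
  (exists delta : R -> R -> R, modulus_uc d delta /\
     (modulus_monotone delta \/ modulus_lsc_right delta)) ->
  (exists a, A a) -> (exists b, B b) ->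
  metric_closed d A -> metric_closed d B ->
  geod_convex d A -> geod_convex d B ->
  metric_bounded d B ->
  cyclic_map A B T ->
  relatively_nonexpansive d A B T ->
  exists x y, A x /\ B y /\
    Finite (d x (T x)) = distAB d A B /\ Finite (d y (T y)) = distAB d A B.
Proof.
  intros Hm Hc Hbus Hgeo Hdelta [a0 Aa0] [b0 Bb0] clA clB cvA cvB Hbd [TA TB] Hne.
  pose proof Hm as [Hpos [Hsep [Hsym Htri]]].
  assert (U := ucu_of d Hm Hdelta).
  set (Sset := fun r => exists x y, A x /\ B y /\ r = d x y).
  destruct (inf_ex Sset 0) as [D [Dlow' Dapp']].
  { exists (d a0 b0). exists a0, b0. auto. }
  { intros r [x [y [_ [_ ->]]]]. apply Hpos. }
  assert (Dlow : forall x y, A x -> B y -> D <= d x y).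
  { intros x y Ax By. apply Dlow'. exists x, y. auto. }
  assert (Dapp : forall e, 0 < e -> exists x y, A x /\ B y /\ d x y < D + e).
  { intros e He. destruct (Dapp' e He) as [r [[x [y [Ax [By ->]]]] Hr]]. exists x, y. auto. }
  assert (HD : 0 <= D).
  { destruct (Rle_lt_dec 0 D) as [h|h]; auto.
    destruct (Dapp (- D) ltac:(lra)) as [x [y [_ [_ h']]]]. specialize (Hpos x y). lra. }
  assert (Hdist : distAB d A B = Finite D).
  { unfold distAB. apply is_glb_Rbar_unique. split.
    - intros r Hr. simpl. apply Dlow'. exact Hr.
    - intros [b| |] Hb; simpl; auto.
      + destruct (Rle_lt_dec b D) as [h|h]; auto.
        destruct (Dapp (b - D) ltac:(lra)) as [x [y [Ax [By h']]]].
        specialize (Hb (d x y) ltac:(exists x, y; auto)). simpl in Hb. lra.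
      + exact (Hb (d a0 b0) ltac:(exists a0, b0; auto)). }
  rewrite Hdist.
  destruct (exists_prox d Hm Hc U Hbus Hgeo A B D clA clB cvA cvB Hbd HD Dlow Dapp) as [x0 [y0 [Ax0 [By0 Hxy0]]]].
  set (an := fun n => fst (orbit T (x0, y0) n)).
  set (bn := fun n => snd (orbit T (x0, y0) n)).
  assert (Horb : forall n, A (an n) /\ B (bn n) /\ d (an n) (bn n) <= D).
  { induction n as [|n [IA [IB ID]]].
    - unfold an, bn; simpl. auto.
    - unfold an, bn in *; simpl. split; [apply TB; auto|]. split; [apply TA; auto|].
      rewrite Hsym. eapply Rle_trans; [apply Hne; auto|]. lra. }
  destruct Hbd as [p [M HM]].
  set (hn := fun x y n => Rmax (d x (bn n)) (d y (an n))).
  set (EB := fun x y r => exists N, forall n, (N <= n)%nat -> hn x y n <= r).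
  assert (EBex : forall q : X * X, exists m, (forall r, EB (fst q) (snd q) r -> m <= r) /\
                   (forall e, 0 < e -> exists r, EB (fst q) (snd q) r /\ r < m + e)).
  { intros [x y]. simpl. apply (inf_ex _ 0).
    - exists (d x p + d y p + M + D). exists 0%nat. intros n _. unfold hn.
      destruct (Horb n) as [IA [IB ID]]. assert (h1 := HM _ IB).
      apply Rmax_lub.
      + assert (t := Htri x p (bn n)). assert (h2 := Hpos y p). lra.
      + assert (t := Htri y p (bn n)). assert (t2 := Htri y (bn n) (an n)).
        rewrite (Hsym (bn n) (an n)) in t2. assert (h2 := Hpos x p). lra.
    - intros r [N HN]. specialize (HN N (le_n N)). eapply Rle_trans; [|exact HN].
      unfold hn. eapply Rle_trans; [apply Hpos|apply Rmax_l]. }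
  destruct (functional_choice _ EBex) as [Phi HPhi].
  set (Ph := fun x y => Phi (x, y)).
  assert (P2 : forall x y r, EB x y r -> Ph x y <= r).
  { intros x y r H. exact (proj1 (HPhi (x, y)) r H). }
  assert (P3 : forall x y th, 0 < th -> EB x y (Ph x y + th)).
  { intros x y th Hth. destruct (proj2 (HPhi (x, y)) th Hth) as [r [[N HN] Hr]].
    exists N. intros n Hn. specialize (HN n Hn). unfold Ph. simpl in Hr, HN. lra. }
  assert (Lip : forall x y x' y', Ph x' y' <= Ph x y + d x x' + d y y').
  { intros x y x' y'. apply le_eps. intros e He.
    replace (Ph x y + d x x' + d y y' + e) with ((Ph x y + e) + d x x' + d y y') by ring.
    apply P2. destruct (P3 x y e He) as [N HN]. exists N. intros n Hn. specialize (HN n Hn).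
    unfold hn in *. assert (a1 := Rmax_l (d x (bn n)) (d y (an n))).
    assert (a2 := Rmax_r (d x (bn n)) (d y (an n))).
    assert (t1 := Htri x' x (bn n)). assert (t2 := Htri y' y (an n)).
    rewrite (Hsym x' x) in t1. rewrite (Hsym y' y) in t2.
    assert (0 <= d x x') by apply Hpos. assert (0 <= d y y') by apply Hpos.
    apply Rmax_lub; lra. }
  assert (Smono : forall x y, A x -> B y -> Ph (T y) (T x) <= Ph x y).
  { intros x y Ax By. apply le_eps. intros e He. apply P2.
    destruct (P3 x y e He) as [N HN]. exists (S N). intros n Hn.
    destruct n as [|k]; [lia|]. specialize (HN k ltac:(lia)).
    destruct (Horb k) as [IA [IB _]].
    unfold hn in *. unfold an, bn in *. simpl. fold (an k) (bn k) in *.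
    assert (h1 := Hne (an k) y IA By). assert (h2 := Hne x (bn k) Ax IB).
    rewrite (Hsym (T (an k)) (T y)) in h1. rewrite (Hsym (an k) y) in h1.
    assert (a1 := Rmax_l (d x (bn k)) (d y (an k))).
    assert (a2 := Rmax_r (d x (bn k)) (d y (an k))).
    apply Rmax_lub; lra. }

  assert (Phnn : forall x y, 0 <= Ph x y).
  { intros x y. destruct (Rle_lt_dec 0 (Ph x y)) as [h|h]; auto. exfalso.
    destruct (proj2 (HPhi (x, y)) (- Ph x y) ltac:(lra)) as [r [[N HN] Hr]].
    specialize (HN N (le_n N)). simpl in HN. unfold hn in HN.
    assert (a1 := Rmax_l (d x (bn N)) (d y (an N))). assert (q := Hpos x (bn N)).
    unfold Ph in *. lra. }
  set (Kp := fun x y => A x /\ B y /\ d x y <= D).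
  destruct (inf_ex (fun r => exists x y, Kp x y /\ r = Ph x y) 0) as [mu [Mlow' Mapp']].
  { exists (Ph x0 y0). exists x0, y0. split; auto. unfold Kp; auto. }
  { intros r [x [y [_ ->]]]. apply Phnn. }
  assert (Mlow : forall x y, Kp x y -> mu <= Ph x y).
  { intros x y H. apply Mlow'. exists x, y. auto. }
  assert (Hmu0 : 0 <= mu).
  { destruct (Rle_lt_dec 0 mu) as [h|h]; auto. exfalso.
    destruct (Mapp' (- mu) ltac:(lra)) as [r [[x [y [_ ->]]] Hr]]. assert (q := Phnn x y). lra. }
  assert (step : forall e, 0 < e -> exists th, 0 < th /\ forall x y x' y', Kp x y -> Kp x' y' ->
              Ph x y <= mu + th -> Ph x' y' <= mu + th -> d x x' < e /\ d y y' < e).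
  { intros e He.
    destruct (partner d Hm U Hbus Hgeo D A B HD cvA Dlow e He) as [eta1 [Heta1 Pt1]].
    assert (Dlow2 : forall u v, B u -> A v -> D <= d u v).
    { intros u v Bu Av. rewrite Hsym. apply Dlow; auto. }
    destruct (partner d Hm U Hbus Hgeo D B A HD cvB Dlow2 e He) as [eta2 [Heta2 Pt2]].
    set (e2 := Rmin e (Rmin eta1 eta2)).
    assert (He2 : 0 < e2 /\ e2 <= e /\ e2 <= eta1 /\ e2 <= eta2).
    { unfold e2. split; [repeat apply Rmin_glb_lt; lra|]. split; [apply Rmin_l|].
      split.
      - eapply Rle_trans; [apply Rmin_r|apply Rmin_l].
      - eapply Rle_trans; [apply Rmin_r|apply Rmin_r]. }
    destruct (U mu e2 Hmu0 ltac:(lra)) as [th [c [Hth [Hcc K]]]].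
    exists (th / 2). split; [lra|].
    intros x y x' y' [Ax [By Dxy]] [Ax' [By' Dxy']] Hp Hp'.
    assert (core : e2 <= d x x' -> e2 <= d y y' -> False).
    { intros h1 h2.
      destruct (P3 x y (th/2) ltac:(lra)) as [N1 HN1].
      destruct (P3 x' y' (th/2) ltac:(lra)) as [N2 HN2].
      destruct (mid_pair d Hbus Hgeo x x' y y') as [mx [my [Mx [My [Cx [Cy Hd]]]]]].
      assert (Km : Kp mx my).
      { split; [apply Cx; auto|]. split; [apply Cy; auto|]. lra. }
      assert (EBm : EB mx my (mu - c)).
      { exists (Nat.max N1 N2). intros n Hn.
        assert (q1 := HN1 n ltac:(lia)). assert (q2 := HN2 n ltac:(lia)). unfold hn in *.
        assert (a1 := Rmax_l (d x (bn n)) (d y (an n))).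
        assert (a2 := Rmax_r (d x (bn n)) (d y (an n))).
        assert (a3 := Rmax_l (d x' (bn n)) (d y' (an n))).
        assert (a4 := Rmax_r (d x' (bn n)) (d y' (an n))).
        apply Rmax_lub.
        - apply (K (bn n) x x' mx); auto; lra.
        - apply (K (an n) y y' my); auto; lra. }
      assert (q1 := P2 _ _ _ EBm). assert (q2 := Mlow _ _ Km). lra. }
    split.
    - destruct (Rlt_le_dec (d x x') e) as [h|h]; auto. exfalso.
      assert (q := Pt1 x x' y y' Ax Ax' By By' Dxy Dxy' h). apply core; lra.
    - destruct (Rlt_le_dec (d y y') e) as [h|h]; auto. exfalso.
      assert (q := Pt2 y y' x x' By By' Ax Ax' ltac:(rewrite Hsym; lra) ltac:(rewrite Hsym; lra) h).
      apply core; lra. }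
  assert (Hch : forall k : nat, exists q : X * X, Kp (fst q) (snd q) /\ Ph (fst q) (snd q) < mu + / (INR k + 1)).
  { intros k. assert (0 < / (INR k + 1)) by (apply Rinv_0_lt_compat; pose proof (pos_INR k); lra).
    destruct (Mapp' _ H) as [r [[x [y [Kxy ->]]] Hr]]. exists (x, y). simpl. auto. }
  destruct (functional_choice _ Hch) as [f Hf].
  set (xs := fun k => fst (f k)). set (ys := fun k => snd (f k)).
  assert (Cxy : cauchy_seq d xs /\ cauchy_seq d ys).
  { split; intros e He; destruct (step e He) as [th [Hth St]];
      destruct (small_inv th Hth) as [N HN]; exists N; intros n m Hn Hm';
      destruct (Hf n) as [K1 P1]; destruct (Hf m) as [K2 Q1];
      assert (u1 := HN n Hn); assert (u2 := HN m Hm');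
      destruct (St _ _ _ _ K1 K2 ltac:(lra) ltac:(lra)) as [r1 r2]; unfold xs, ys; auto. }
  destruct Cxy as [Cx Cy].
  destruct (Hc xs Cx) as [xst Hx]. destruct (Hc ys Cy) as [yst Hy].
  assert (Axs : A xst) by (apply (clA xs); auto; intro n; apply (Hf n)).
  assert (Bys : B yst) by (apply (clB ys); auto; intro n; apply (Hf n)).
  assert (Dst : d xst yst <= D).
  { apply (limit_le d Hm xs ys xst yst D Hx Hy).
    intros e He. exists 0%nat. intros n _. destruct (Hf n) as [[_ [_ h]] _]. unfold xs, ys. lra. }
  assert (Kst : Kp xst yst) by (split; auto).
  assert (Pst : Ph xst yst <= mu).
  { apply le_eps. intros e He.
    destruct (small_inv (e/3) ltac:(lra)) as [N1 HN1].
    destruct (Hx (e/3) ltac:(lra)) as [N2 HN2]. destruct (Hy (e/3) ltac:(lra)) as [N3 HN3].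
    set (n := Nat.max N1 (Nat.max N2 N3)).
    assert (q1 := HN1 n ltac:(lia)). assert (q2 := HN2 n ltac:(lia)). assert (q3 := HN3 n ltac:(lia)).
    destruct (Hf n) as [_ q4]. assert (q5 := Lip (xs n) (ys n) xst yst). unfold xs, ys in *. lra. }
  assert (K2 : Kp (T yst) (T xst)).
  { split; [apply TB; auto|]. split; [apply TA; auto|]. rewrite Hsym.
    eapply Rle_trans; [apply Hne; auto|lra]. }
  assert (P2st : Ph (T yst) (T xst) <= mu) by (assert (q := Smono xst yst Axs Bys); lra).
  assert (Eq : d xst (T yst) = 0 /\ d yst (T xst) = 0).
  { split; apply Rle_antisym; try apply Hpos; apply le_eps; intros e He;
      destruct (step e He) as [th [Hth St]];
      destruct (St _ _ _ _ Kst K2 ltac:(lra) ltac:(lra)) as [r1 r2]; lra. }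
  destruct Eq as [E1 E2]. apply Hsep in E1. apply Hsep in E2.
  assert (DD : d xst yst = D) by (apply Rle_antisym; auto).
  exists xst, yst. split; auto. split; auto.
  rewrite <- E2, <- E1.
  split; f_equal; [exact DD|]. rewrite Hsym. exact DD.
Qed.
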